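(* Let $C$ be a weak 2-group, let $x\in C$, and let $\bar x\in C$ be an object equipped with isomorphisms $i_x\colon 1\to x\otimes\bar x$ and $e_x\colon\bar x\otimes x\to 1$. Consider the two morphisms $A,B\colon 1\to x\otimes\bar x$ defined as composites $$A\colon\ 1\xrightarrow{i_x}x\otimes\bar x\xrightarrow{\cong}x\otimes(1\otimes\bar x)\xrightarrow{1_x\otimes(e_x^{-1}\otimes 1_{\bar x})}x\otimes((\bar x\otimes x)\otimes\bar x)\xrightarrow{\cong}(x\otimes\bar x)\otimes(x\otimes\bar x)\xrightarrow{i_x^{-1}\otimes 1_{x\otimes\bar x}}1\otimes(x\otimes\bar x)\xrightarrow{\cong}x\otimes\bar x,$$ $$B\colon\ 1\xrightarrow{i_x}x\otimes\bar x\xrightarrow{\cong}(x\otimes 1)\otimes\bar x\xrightarrow{(1_x\otimes e_x^{-1})\otimes 1_{\bar x}}(x\otimes(\bar x\otimes x))\otimes\bar x\xrightarrow{\cong}(x\otimes\bar x)\otimes(x\otimes\bar x)\xrightarrow{1_{x\otimes\bar x}\otimes i_x^{-1}}(x\otimes\bar x)\otimes 1\xrightarrow{\cong}x\otimes\bar x,$$ where each unlabeled arrow $\cong$ is the canonical isomorphism built from associators and left/right unitors (unique by Mac Lane's coherence theorem). Then $A=B$.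
   Context: A weak 2-group is a weak monoidal category (with associator, left and right unitors, unit object $1$) in which every morphism is invertible and every object $x$ admits an object $y$ with $x\otimes y\cong 1\cong y\otimes x$. *)

(* Defs.v *)
(* Plain Rocq (no library): weak monoidal categories and weak 2-groups.
   Composition is written in diagrammatic order:  f ;; g  means "first f, then g". *)
Set Implicit Arguments.
Unset Strict Implicit.

Record Category := {
  Obj :> Type;
  Hom : Obj -> Obj -> Type;
  idm : forall a, Hom a a;
  comp : forall a b c, Hom a b -> Hom b c -> Hom a c;
  comp_id_l : forall a b (f : Hom a b), comp (idm a) f = f;
  comp_id_r : forall a b (f : Hom a b), comp f (idm b) = f;
  comp_assoc : forall a b c d (f : Hom a b) (g : Hom b c) (h : Hom c d),
      comp (comp f g) h = comp f (comp g h)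
}.

Arguments Hom {C} : rename.
Arguments idm {C} a : rename.
Arguments comp {C a b c} : rename.
Notation "f ;; g" := (comp f g) (at level 40, left associativity).

Definition is_inverse (C : Category) (a b : C) (f : Hom a b) (g : Hom b a) : Prop :=
  f ;; g = idm a /\ g ;; f = idm b.

Record MonoidalCategory := {
  cat :> Category;
  tens : cat -> cat -> cat;
  tensm : forall a b c d, Hom a c -> Hom b d -> Hom (tens a b) (tens c d);
  unit : cat;
  tensm_id : forall a b, tensm (idm a) (idm b) = idm (tens a b);
  tensm_comp : forall a1 a2 a3 b1 b2 b3 (f : Hom a1 a2) (f' : Hom a2 a3)
      (g : Hom b1 b2) (g' : Hom b2 b3),
      tensm (f ;; f') (g ;; g') = tensm f g ;; tensm f' g';
  assoc : forall a b c, Hom (tens (tens a b) c) (tens a (tens b c));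
  assoc_inv : forall a b c, Hom (tens a (tens b c)) (tens (tens a b) c);
  lunit : forall a, Hom (tens unit a) a;
  lunit_inv : forall a, Hom a (tens unit a);
  runit : forall a, Hom (tens a unit) a;
  runit_inv : forall a, Hom a (tens a unit);
  assoc_iso : forall a b c, is_inverse (assoc a b c) (assoc_inv a b c);
  lunit_iso : forall a, is_inverse (lunit a) (lunit_inv a);
  runit_iso : forall a, is_inverse (runit a) (runit_inv a);
  assoc_nat : forall a a' b b' c c' (f : Hom a a') (g : Hom b b') (h : Hom c c'),
      tensm (tensm f g) h ;; assoc a' b' c' = assoc a b c ;; tensm f (tensm g h);
  lunit_nat : forall a a' (f : Hom a a'),
      tensm (idm unit) f ;; lunit a' = lunit a ;; f;
  runit_nat : forall a a' (f : Hom a a'),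
      tensm f (idm unit) ;; runit a' = runit a ;; f;
  pentagon : forall w x y z,
      tensm (assoc w x y) (idm z) ;; assoc w (tens x y) z ;; tensm (idm w) (assoc x y z)
      = assoc (tens w x) y z ;; assoc w x (tens y z);
  triangle : forall x y,
      assoc x unit y ;; tensm (idm x) (lunit y) = tensm (runit x) (idm y)
}.

Arguments tens {M} : rename.
Arguments tensm {M a b c d} : rename.
Arguments unit {M} : rename.
Arguments assoc {M} : rename.
Arguments assoc_inv {M} : rename.
Arguments lunit {M} : rename.
Arguments lunit_inv {M} : rename.
Arguments runit {M} : rename.
Arguments runit_inv {M} : rename.
Notation "a ⊗ b" := (tens a b) (at level 35, right associativity).
Notation "f ⊗m g" := (tensm f g) (at level 35, right associativity).

Definition is_weak_2group (M : MonoidalCategory) : Prop :=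
  (forall (a b : M) (f : Hom a b), exists g : Hom b a, is_inverse f g) /\
  (forall x : M, exists y : M,
      (exists f : Hom (x ⊗ y) unit, exists g, is_inverse f g) /\
      (exists f : Hom (y ⊗ x) unit, exists g, is_inverse f g)).

Section Composites.
Variables (M : MonoidalCategory) (x xb : M).
Variables (ix : Hom unit (x ⊗ xb)) (ix_inv : Hom (x ⊗ xb) unit).
Variables (ex : Hom (xb ⊗ x) unit) (ex_inv : Hom unit (xb ⊗ x)).

(* The composite A; the unlabeled canonical isomorphisms are chosen as
   x⊗x̄ -> x⊗(1⊗x̄) : 1⊗λ^{-1};
   x⊗((x̄⊗x)⊗x̄) -> (x⊗x̄)⊗(x⊗x̄) : (1⊗α) then α^{-1};
   1⊗(x⊗x̄) -> x⊗x̄ : λ. *)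
Definition compA : Hom unit (x ⊗ xb) :=
  ix
  ;; (idm x ⊗m lunit_inv xb)
  ;; (idm x ⊗m (ex_inv ⊗m idm xb))
  ;; (idm x ⊗m assoc xb x xb)
  ;; assoc_inv x xb (x ⊗ xb)
  ;; (ix_inv ⊗m idm (x ⊗ xb))
  ;; lunit (x ⊗ xb).

(* The composite B; canonical isomorphisms:
   x⊗x̄ -> (x⊗1)⊗x̄ : ρ^{-1}⊗1;
   (x⊗(x̄⊗x))⊗x̄ -> (x⊗x̄)⊗(x⊗x̄) : (α^{-1}⊗1) then α;
   (x⊗x̄)⊗1 -> x⊗x̄ : ρ. *)
Definition compB : Hom unit (x ⊗ xb) :=
  ix
  ;; (runit_inv x ⊗m idm xb)
  ;; ((idm x ⊗m ex_inv) ⊗m idm xb)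
  ;; (assoc_inv x xb x ⊗m idm xb)
  ;; assoc (x ⊗ xb) x xb
  ;; (idm (x ⊗ xb) ⊗m ix_inv)
  ;; runit (x ⊗ xb).
End Composites.

(* Main.v *)
Require Import Defs.
From Stdlib Require Import Setoid.

Section Aux.
Variable M : MonoidalCategory.

Lemma inv_pre {a b c : M} {f : Hom a b} {g : Hom b a} {h : Hom b c} {k : Hom a c} :
  is_inverse f g -> f ;; h = k -> h = g ;; k.
Proof.
  intros [H1 H2] E. subst k. rewrite <- comp_assoc, H2, comp_id_l. reflexivity.
Qed.

Lemma inv_post {a b c : M} {f : Hom b c} {g : Hom c b} {h : Hom a b} {k : Hom a c} :
  is_inverse f g -> h ;; f = k -> h = k ;; g.
Proof.
  intros [H1 H2] E. subst k. rewrite comp_assoc, H1, comp_id_r. reflexivity.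
Qed.

Lemma inv_sym {a b : M} {f : Hom a b} {g} : is_inverse f g -> is_inverse g f.
Proof. intros [H1 H2]; split; assumption. Qed.

Lemma tens_inv {a b c d : M} {f : Hom a b} {g} {f' : Hom c d} {g'} :
  is_inverse f g -> is_inverse f' g' -> is_inverse (f ⊗m f') (g ⊗m g').
Proof.
  intros [H1 H2] [H3 H4]; split; rewrite <- tensm_comp.
  - rewrite H1, H3; apply tensm_id.
  - rewrite H2, H4; apply tensm_id.
Qed.

Lemma id_inv (a : M) : is_inverse (idm a) (idm a).
Proof. split; apply comp_id_l. Qed.

Lemma lfaith (a b : M) (f g : Hom a b) : idm unit ⊗m f = idm unit ⊗m g -> f = g.
Proof.
  intros E.
  assert (Hf := lunit_nat f). assert (Hg := lunit_nat g). rewrite E in Hf.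
  rewrite Hg in Hf.
  apply (inv_pre (lunit_iso a)) in Hf.
  rewrite <- comp_assoc, (proj2 (lunit_iso a)), comp_id_l in Hf. symmetry; exact Hf.
Qed.

Lemma rfaith (a b : M) (f g : Hom a b) : f ⊗m idm unit = g ⊗m idm unit -> f = g.
Proof.
  intros E.
  assert (Hf := runit_nat f). assert (Hg := runit_nat g). rewrite E in Hf.
  rewrite Hg in Hf.
  apply (inv_pre (runit_iso a)) in Hf.
  rewrite <- comp_assoc, (proj2 (runit_iso a)), comp_id_l in Hf. symmetry; exact Hf.
Qed.

Lemma assoc_tens_iso (a b c : M) : is_inverse (assoc a b c) (assoc_inv a b c).
Proof. apply assoc_iso. Qed.

Lemma lunit_tens (a b : M) :
  assoc unit a b ;; lunit (a ⊗ b) = lunit a ⊗m idm b.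
Proof.
  apply lfaith.
  assert (Iso : is_inverse (tensm (assoc unit unit a) (idm b) ;; assoc unit (unit ⊗ a) b)
                   (assoc_inv unit (unit ⊗ a) b ;; tensm (assoc_inv unit unit a) (idm b))).
  { pose proof (tens_inv (assoc_iso unit unit a) (id_inv b)) as [T1 T2].
    pose proof (assoc_iso unit (unit ⊗ a) b) as [S1 S2].
    split.
    - rewrite comp_assoc, <- (comp_assoc (assoc _ _ _)), S1, comp_id_l. exact T1.
    - rewrite comp_assoc, <- (comp_assoc (tensm _ _)), T2, comp_id_l. exact S2. }
  destruct Iso as [I1 I2].
  transitivity ((assoc_inv unit (unit ⊗ a) b ;; tensm (assoc_inv unit unit a) (idm b)) ;;
     ((tensm (assoc unit unit a) (idm b) ;; assoc unit (unit ⊗ a) b) ;; (idm unit ⊗m (assoc unit a b ;; lunit (a ⊗ b))))).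
  { rewrite <- comp_assoc, I2, comp_id_l. reflexivity. }
  transitivity ((assoc_inv unit (unit ⊗ a) b ;; tensm (assoc_inv unit unit a) (idm b)) ;;
     ((tensm (assoc unit unit a) (idm b) ;; assoc unit (unit ⊗ a) b) ;; (idm unit ⊗m (lunit a ⊗m idm b)))).
  2: { rewrite <- comp_assoc, I2, comp_id_l. reflexivity. }
  f_equal.
  transitivity (((runit unit ⊗m idm a) ⊗m idm b) ;; assoc unit a b).
  - replace (idm unit ⊗m (assoc unit a b;; lunit (a ⊗ b))) with
      ((idm unit ⊗m assoc unit a b) ;; (idm unit ⊗m lunit (a ⊗ b)))
      by (rewrite <- tensm_comp, comp_id_l; reflexivity).
    rewrite <- comp_assoc, pentagon, comp_assoc, triangle.
    rewrite <- tensm_id, <- assoc_nat. reflexivity.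
  - rewrite comp_assoc.
    rewrite <- (assoc_nat (idm unit) (lunit a) (idm b)).
    rewrite <- comp_assoc, <- tensm_comp, triangle, comp_id_l. reflexivity.
Qed.

End Aux.

Lemma lunit_runit_unit (M : MonoidalCategory) : lunit (unit : M) = runit unit.
Proof.
  assert (H : lunit (unit ⊗ unit) = idm unit ⊗m lunit (unit : M)).
  { pose proof (lunit_nat (lunit (unit : M))) as H.
    apply (inv_post _ (lunit_iso unit)) in H.
    rewrite comp_assoc, (proj1 (lunit_iso unit)), comp_id_r in H.
    symmetry; exact H. }
  apply rfaith.
  rewrite <- triangle, <- lunit_tens, H. reflexivity.
Qed.

Lemma tail_eq (M : MonoidalCategory) (X : M) (i : Hom unit X) (j : Hom X unit) :
  is_inverse i j -> (j ⊗m idm X) ;; lunit X = (idm X ⊗m j) ;; runit X.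
Proof.
  intros [H1 H2].
  replace (j ⊗m idm X) with ((j ⊗m j) ;; (idm unit ⊗m i))
    by (rewrite <- tensm_comp, comp_id_r, H2; reflexivity).
  replace (idm X ⊗m j) with ((j ⊗m j) ;; (i ⊗m idm unit))
    by (rewrite <- tensm_comp, comp_id_r, H2; reflexivity).
  rewrite !comp_assoc, lunit_nat, runit_nat, lunit_runit_unit. reflexivity.
Qed.

Lemma midL (M : MonoidalCategory) (x xb : M) (ex_inv : Hom unit (xb ⊗ x)) :
  (idm x ⊗m lunit_inv xb) ;; (idm x ⊗m (ex_inv ⊗m idm xb)) ;; (idm x ⊗m assoc xb x xb)
  ;; assoc_inv x xb (x ⊗ xb)
  = (runit_inv x ⊗m idm xb) ;; ((idm x ⊗m ex_inv) ⊗m idm xb) ;; (assoc_inv x xb x ⊗m idm xb)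
  ;; assoc (x ⊗ xb) x xb.
Proof.
  assert (H1 : (idm x ⊗m ex_inv) ⊗m idm xb =
     assoc x unit xb ;; (idm x ⊗m (ex_inv ⊗m idm xb)) ;; assoc_inv x (xb ⊗ x) xb).
  { apply (inv_post _ (assoc_iso _ _ _)). apply assoc_nat. }
  assert (H2 : (runit_inv x ⊗m idm xb) ;; assoc x unit xb = idm x ⊗m lunit_inv xb).
  { transitivity (idm _ ;; (idm x ⊗m lunit_inv xb)); [| apply comp_id_l].
    apply (inv_post _ (tens_inv _ (id_inv _ x) (lunit_iso xb))).
    rewrite comp_assoc, triangle.
    exact (proj2 (tens_inv _ (runit_iso x) (id_inv _ xb))). }
  assert (H3 : assoc_inv x (xb ⊗ x) xb ;; ((assoc_inv x xb x ⊗m idm xb) ;; assoc (x ⊗ xb) x xb)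
      = (idm x ⊗m assoc xb x xb) ;; assoc_inv x xb (x ⊗ xb)).
  { apply (inv_post _ (assoc_iso _ _ _)).
    rewrite !comp_assoc, <- pentagon, !comp_assoc.
    rewrite <- (comp_assoc (assoc_inv x xb x ⊗m idm xb)).
    rewrite (proj2 (tens_inv _ (assoc_iso x xb x) (id_inv _ xb))), comp_id_l.
    rewrite <- comp_assoc, (proj2 (assoc_iso _ _ _)), comp_id_l. reflexivity. }
  rewrite H1, !comp_assoc, <- (comp_assoc (runit_inv x ⊗m idm xb)), H2, H3.
  reflexivity.
Qed.

Theorem lemma5p2 (M : MonoidalCategory) (HM : is_weak_2group M) (x xb : M)
  (ix : Hom unit (x ⊗ xb)) (ix_inv : Hom (x ⊗ xb) unit)
  (ex : Hom (xb ⊗ x) unit) (ex_inv : Hom unit (xb ⊗ x))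
  (Hi : is_inverse ix ix_inv) (He : is_inverse ex ex_inv) :
  compA ix ix_inv ex_inv = compB ix ix_inv ex_inv.
Proof.
  unfold compA, compB.
  rewrite !comp_assoc, (tail_eq _ _ ix ix_inv Hi).
  assert (R := midL M x xb ex_inv).
  rewrite !comp_assoc in R.
  apply (f_equal (fun h => ix ;; (h ;; ((idm (x ⊗ xb) ⊗m ix_inv);; runit (x ⊗ xb))))) in R.
  simpl in R. rewrite !comp_assoc in R. exact R.
Qed.
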